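(* Let $m\ge3$, $d\ge1$, $n\in\mathbb{N}_0^d$, and $v=t^1\cdots t^m$. For each $c\in\mathbb{R}^d$, the section $x=c$ of the hypersurface $\{(t,x)\in\mathbb{R}^{m+d}:\ H_n(v,x)=0\}$, i.e. the set $\{t\in\mathbb{R}^m_+:\ H_n(t^1\cdots t^m,c)=0\}$, is a union of Tzitzeica hypersurfaces in $\mathbb{R}^m_+$.
   Context: For $n=(n_1,\dots,n_d)\in\mathbb{N}_0^d$ and $\xi\in\mathbb{R}^d$, $\xi^n=(\xi^1)^{n_1}\cdots(\xi^d)^{n_d}$. The Hermite polynomials $H_n(v,x)$, $v\ge0$, $x\in\mathbb{R}^d$, are defined by the generating function $e^{\langle x,\xi\rangle-\frac12 v\|\xi\|^2}=\sum_{n\in\mathbb{N}_0^d}H_n(v,x)\xi^n$. A hypersurface $M\subset\mathbb{R}^m_+$, $m\ge3$, is a Tzitzeica hypersurface if there is a constant $a\in\mathbb{R}$ such that $K=a\,d^{m+1}$ at every point $t\in M$, where $K$ is the Gauss curvature of $M$ at $t$ and $d$ is the distance from the origin to the tangent hyperplane of $M$ at $t$; the simplest examples are the level sets $t^1\cdots t^m=k$. *)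

(* Defs.v *)
From HB Require Import structures.
From mathcomp Require Import all_boot all_order all_algebra.
From mathcomp Require Import all_classical all_reals all_analysis.
Set Implicit Arguments. Unset Strict Implicit. Unset Printing Implicit Defensive.
Import Order.TTheory GRing.Theory Num.Theory.
Import numFieldNormedType.Exports.
Local Open Scope classical_set_scope.
Local Open Scope ring_scope.

Section Defs.
Variable R : realType.

Definition dotv (m : nat) (u w : 'rV[R]_m) : R := \sum_(i < m) u 0 i * w 0 i.
Definition enorm (m : nat) (u : 'rV[R]_m) : R := Num.sqrt (dotv u u).

Definition posorthant (m : nat) : set 'rV[R]_m := [set t | forall i, 0 < t 0 i].

Definition pD (m : nat) (i : 'I_m) (F : 'rV[R]_m -> R) : 'rV[R]_m -> R :=
  fun t => 'D_(delta_mx 0 i) F t.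
Definition iterD (m : nat) (s : seq 'I_m) (F : 'rV[R]_m -> R) : 'rV[R]_m -> R :=
  foldr (@pD m) F s.

Definition smooth_on (m : nat) (U : set 'rV[R]_m) (F : 'rV[R]_m -> R) : Prop :=
  forall (s : seq 'I_m) (t : 'rV[R]_m), U t ->
    {for t, continuous (iterD s F)} /\
    forall i : 'I_m, derivable (iterD s F) t (delta_mx 0 i).

Definition grad (m : nat) (F : 'rV[R]_m -> R) (t : 'rV[R]_m) : 'rV[R]_m :=
  \row_i pD i F t.

Definition unormal (m : nat) (F : 'rV[R]_m -> R) (t : 'rV[R]_m) : 'rV[R]_m :=
  (enorm (grad F t))^-1 *: grad F t.

Definition hypersurface_by (m : nat) (M : set 'rV[R]_m) (F : 'rV[R]_m -> R) : Prop :=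
  smooth_on (@posorthant m) F /\
  M = [set t | posorthant t /\ F t = 0] /\
  (forall t, M t -> grad F t != 0).

Definition tangent_onb (m : nat) (F : 'rV[R]_m -> R) (t : 'rV[R]_m)
    (e : 'I_m.-1 -> 'rV[R]_m) : Prop :=
  (forall i j, dotv (e i) (e j) = (i == j)%:R) /\
  (forall i, dotv (e i) (grad F t) = 0).

Definition shape_matrix (m : nat) (F : 'rV[R]_m -> R) (t : 'rV[R]_m)
    (e : 'I_m.-1 -> 'rV[R]_m) : 'M[R]_(m.-1) :=
  \matrix_(i, j) (- dotv ('D_(e j) (unormal F) t) (e i)).

Definition gauss_curvature (m : nat) (F : 'rV[R]_m -> R) (t : 'rV[R]_m)
    (e : 'I_m.-1 -> 'rV[R]_m) : R := \det (shape_matrix F t e).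

Definition dist_tangent (m : nat) (F : 'rV[R]_m -> R) (t : 'rV[R]_m) : R :=
  `| dotv t (unormal F t) |.

Definition tzitzeica (m : nat) (M : set 'rV[R]_m) : Prop :=
  exists F : 'rV[R]_m -> R, hypersurface_by M F /\
  exists a : R, forall t, M t -> forall e, tangent_onb F t e ->
    gauss_curvature F t e = a * dist_tangent F t ^+ m.+1.

Definition union_of_tzitzeica (m : nat) (S : set 'rV[R]_m) : Prop :=
  S `<=` @posorthant m /\
  forall t, S t -> exists M : set 'rV[R]_m, tzitzeica M /\ M t /\ M `<=` S.

(* Hermite polynomials H_n(v,x): coefficient of xi^n in
   exp(<x,xi> - v |xi|^2 / 2) = prod_i exp(x_i xi_i - v xi_i^2/2). *)
Definition hermite1 (k : nat) (v y : R) : R :=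
  \sum_(j < k./2.+1)
     (- (v / 2)) ^+ j * y ^+ (k - 2 * j) / ((j`!)%:R * ((k - 2 * j)`!)%:R).

Definition hermite (d : nat) (n : 'I_d -> nat) (v : R) (x : 'rV[R]_d) : R :=
  \prod_(i < d) hermite1 (n i) v (x 0 i).

End Defs.

(* Main.v *)
Require Import Defs.
From HB Require Import structures.
From mathcomp Require Import all_boot all_order all_algebra.
From mathcomp Require Import all_classical all_reals all_analysis.
From mathcomp Require Import ring lra.
Set Implicit Arguments. Unset Strict Implicit. Unset Printing Implicit Defensive.
Import Order.TTheory GRing.Theory Num.Theory.
Import numFieldNormedType.Exports.
Local Open Scope classical_set_scope.
Local Open Scope ring_scope.

Section H.
Variable R : realType.


Lemma detB (n : nat) (e : 'I_n -> 'rV[R]_n.+1) (r : 'rV[R]_n.+1) (dl : 'I_n.+1 -> R) :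
  (forall i j, dotv (e i) (e j) = (i == j)%:R) -> (forall i, dotv (e i) r = 0) ->
  (forall k, dl k != 0) ->
  dotv r r * \det (\matrix_(i, j) \sum_k dl k * e i 0 k * e j 0 k)
  = (\prod_k dl k) * \sum_k (dl k)^-1 * r 0 k ^+ 2.
Proof.
move=> eo er dl0.
pose E : 'M[R]_(n, n.+1) := \matrix_(i, k) e i 0 k.
pose D := diag_mx (\row_k dl k). pose D' := diag_mx (\row_k (dl k)^-1).
pose Q : 'M[R]_(1 + n, n.+1) := col_mx r E.
pose Y : 'M[R]_(1 + n, n.+1) := col_mx (r *m D') E.
have h1 : Y *m D *m Q^T = block_mx ((dotv r r)%:M) 0 (E *m D *m r^T)
     (\matrix_(i, j) \sum_k dl k * e i 0 k * e j 0 k).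
  rewrite /Y /Q mul_col_mx tr_col_mx mul_col_row; congr block_mx.
  - apply/matrixP => i j; rewrite !(ord1 i) !(ord1 j) !mxE eqxx mulr1n.
    apply: eq_bigr => k _; rewrite !mul_mx_diag !mxE.
    by field; exact: dl0.
  - apply/matrixP => i j; rewrite !(ord1 i) !mxE.
    transitivity (dotv (e j) r); last exact: er j.
    apply: eq_bigr => k _; rewrite !mul_mx_diag !mxE.
    rewrite mulrC -mulrA mulVf ?mulr1 //; exact: dl0.
  - apply/matrixP => i j; rewrite !mxE.
    apply: eq_bigr => k _; rewrite !mul_mx_diag !mxE.
    ring.
have h2 : Y *m Q^T = block_mx ((\sum_k (dl k)^-1 * r 0 k ^+ 2)%:M) (r *m D' *m E^T)
     0 1%:M.
  rewrite /Y /Q tr_col_mx mul_col_row; congr block_mx.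
  - apply/matrixP => i j; rewrite !(ord1 i) !(ord1 j) !mxE eqxx mulr1n.
    apply: eq_bigr => k _; rewrite !mul_mx_diag !mxE.
    ring.
  - apply/matrixP => i j; rewrite !(ord1 j) !mxE.
    transitivity (dotv (e i) r); last exact: er i.
    by apply: eq_bigr => k _; rewrite ?mxE.
  - apply/matrixP => i j; rewrite !mxE -eo /dotv.
    by apply: eq_bigr => k _; rewrite ?mxE.
have d1 := congr1 determinant h1.
have d2 := congr1 determinant h2.
rewrite det_lblock det_scalar1 in d1.
rewrite det_ublock det_scalar1 det1 mulr1 in d2.
rewrite -d1 -d2 !det_mulmx /D det_diag.
rewrite (eq_bigr (fun k => dl k)); last by move=> k _; rewrite mxE.
ring.
Qed.


Definition mon m (c : R) (A : {set 'I_m}) (b : R) : 'rV[R]_m -> R :=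
  fun s => c * \prod_(j in A) s 0 j + b.

Lemma shiftE m (i j : 'I_m) (h : R) (s : 'rV[R]_m) :
  (h *: delta_mx 0 i + s) 0 j = (if j == i then h else 0) + s 0 j.
Proof. by rewrite !mxE eqxx /=; case: eqP => _; rewrite ?mulr1 ?mulr0. Qed.

Lemma mon_quot m c A b (i : 'I_m) (s : 'rV[R]_m) (h : R) : h != 0 ->
  h^-1 *: (mon c A b (h *: delta_mx 0 i + s) - mon c A b s)
  = mon (if i \in A then c else 0) (A :\ i) 0 s.
Proof.
move=> h0; rewrite /mon addr0.
have [iA|iA] := boolP (i \in A).
- rewrite (big_setD1 i iA) [in X in _ - X](big_setD1 i iA) /=.
  rewrite (eq_bigr (fun j => s 0 j)); last first.
    by move=> j; rewrite in_setD1 => /andP[ji _]; rewrite shiftE (negbTE ji) add0r.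
  rewrite shiftE eqxx.
  rewrite /GRing.scale /=. by field.
- rewrite (eq_bigr (fun j => s 0 j)); last first.
    by move=> j jA; rewrite shiftE; case: eqP => [ji|_]; [move: iA; rewrite -ji jA | rewrite add0r].
  by rewrite subrr scaler0 mul0r.
Qed.

Lemma mon_cvg m c A b (i : 'I_m) (s : 'rV[R]_m) :
  (fun h : R => h^-1 *: ((mon c A b \o shift s) (h *: delta_mx 0 i) - mon c A b s))
     @ (0:R)^' --> mon (if i \in A then c else 0) (A :\ i) 0 s.
Proof.
have H : \forall h \near (0:R)^', mon (if i \in A then c else 0) (A :\ i) 0 s
   = h^-1 *: ((mon c A b \o shift s) (h *: delta_mx 0 i) - mon c A b s).
  near=> h; rewrite /= mon_quot //; near: h; exact: nbhs_dnbhs_neq.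
apply: cvg_trans (near_eq_cvg H) _; exact: cvg_cst.
Unshelve. all: by end_near. Qed.

Lemma pD_mon m c A b (i : 'I_m) :
  pD i (mon c A b) = mon (if i \in A then c else 0) (A :\ i) 0.
Proof. by apply/funext => s; rewrite /pD; apply: cvg_lim => //; exact: mon_cvg. Qed.

Lemma derivable_mon m c A b (i : 'I_m) s : derivable (mon c A b) s (delta_mx 0 i).
Proof. apply/cvg_ex; eexists; exact: mon_cvg. Qed.

Lemma continuous_prod_seq m (G : 'I_m -> 'rV[R]_m -> R) (r : seq 'I_m) x :
  (forall j, {for x, continuous (G j)}) ->
  {for x, continuous (fun s => \prod_(j <- r) G j s)}.
Proof.
move=> HG; elim: r => [|j r IH].
  rewrite (_ : (fun s => _) = (fun _ => 1)); last by apply/funext => s; rewrite big_nil.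
  exact: cst_continuous.
rewrite (_ : (fun s => _) = (G j \* (fun s => \prod_(j <- r) G j s))); last first.
  by apply/funext => s; rewrite big_cons.
exact: continuousM.
Qed.

Lemma continuous_mon m c A b (x : 'rV[R]_m) : {for x, continuous (mon c A b)}.
Proof.
rewrite /mon.
have -> : (fun s : 'rV[R]_m => c * \prod_(j in A) s 0 j + b) =
  ((fun _ => c) \* (fun s => \prod_(j <- index_enum 'I_m) (fun j s => if j \in A then s 0 j else 1) j s)) + (fun _ => b).
  apply/funext => s /=; by rewrite big_mkcond.
apply: continuousD; last exact: cst_continuous.
apply: continuousM; first exact: cst_continuous.
apply: continuous_prod_seq => j.
case: (j \in A); [exact: coord_continuous | exact: cst_continuous].
Qed.

Lemma iterD_mon m (c : R) (A : {set 'I_m}) (b : R) (l : seq 'I_m) :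
  exists (c' : R) (A' : {set 'I_m}) (b' : R), Defs.iterD l (mon c A b) = mon c' A' b'.
Proof.
elim: l => [|i l [c' [A' [b' IH]]]]; first by exists c, A, b.
by exists (if i \in A' then c' else 0), (A' :\ i), 0; rewrite /= IH pD_mon.
Qed.

Lemma smooth_mon m (U : set 'rV[R]_m) (c : R) (A : {set 'I_m}) (b : R) : smooth_on U (mon c A b).
Proof.
move=> l t _; have [c' [A' [b' ->]]] := iterD_mon c A b l.
split; [exact: continuous_mon | move=> i; exact: derivable_mon].
Qed.


Lemma derive_coord m (t v : 'rV[R]_m) k :
  'D_v (fun s : 'rV[R]_m => s 0 k) t = v 0 k.
Proof.
apply: cvg_lim => //.
have H : \forall h \near (0:R)^', v 0 k = h^-1 *: ((h *: v + t) 0 k - t 0 k).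
  near=> h. apply/esym. rewrite !mxE addrK /GRing.scale /= mulrA mulVf ?mul1r //.
  near: h; exact: nbhs_dnbhs_neq.
apply: cvg_trans (near_eq_cvg H) _; exact: cvg_cst.
Unshelve. all: by end_near. Qed.

Lemma derivable_coord m (t v : 'rV[R]_m) k :
  derivable (fun s : 'rV[R]_m => s 0 k) t v.
Proof. exact/diff_derivable/differentiable_coord. Qed.

Definition rr m (s : 'rV[R]_m) : 'rV[R]_m := \row_k (s 0 k)^-1.
Definition ww m (s : 'rV[R]_m) : R := (enorm (rr s))^-1.
Definition nn m (s : 'rV[R]_m) : 'rV[R]_m := ww s *: rr s.

Lemma near_pos m (t : 'rV[R]_m) : posorthant t -> \forall s \near t, posorthant s.
Proof.
move=> tp.
have H : forall k : 'I_m, \forall s \near t, 0 < (s : 'rV[R]_m) 0 k.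
  by move=> k; exact: (cvgr_gt _ (@coord_continuous R 1 m 0 k t) _ (tp k)).
have H2 : \forall s \near t, forall k, 0 < (s : 'rV[R]_m) 0 k by apply: (@filter_forall _ 'I_m (fun k (s : 'rV[R]_m) => 0 < s 0 k) _ _ H).
exact: H2.
Qed.

Lemma dot_rr_gt0 n (s : 'rV[R]_n.+1) : posorthant s -> 0 < dotv (rr s) (rr s).
Proof.
move=> sp; rewrite /dotv big_ord_recl ltr_pwDl //.
  by rewrite !mxE mulr_gt0 // invr_gt0; exact: sp.
by apply: sumr_ge0 => k _; rewrite !mxE mulr_ge0 // invr_ge0 ltW //; exact: sp.
Qed.

Lemma differentiable_ww n (t : 'rV[R]_n.+1) : posorthant t -> differentiable (@ww _) t.
Proof.
move=> tp.
have dq : forall k, differentiable (fun s : 'rV[R]_n.+1 => (s 0 k)^-1) t.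
  move=> k; apply: differentiableV; first exact: differentiable_coord.
  by rewrite gt_eqF //; exact: tp.
have dS : differentiable (fun s : 'rV[R]_n.+1 => dotv (rr s) (rr s)) t.
  rewrite (_ : (fun s => _) = \sum_(k < n.+1) (fun s : 'rV[R]_n.+1 => (s 0 k)^-1 * (s 0 k)^-1)); last first.
    by rewrite fct_sumE; apply/funext => s; rewrite /dotv; apply: eq_bigr => k _; rewrite !mxE.
  apply: differentiable_sum => k.
  exact: (differentiableM (dq k) (dq k)).
have S0 := dot_rr_gt0 tp.
have dsq : differentiable (Num.sqrt \o (fun s : 'rV[R]_n.+1 => dotv (rr s) (rr s))) t.
  apply: differentiable_comp => //.
  apply/derivable1_diffP; by case: (is_derive1_sqrt S0).
rewrite /ww /enorm.
apply: (differentiableV dsq).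
by rewrite /= gt_eqF // sqrtr_gt0.
Qed.


Lemma derive_nn_dot n (t e v : 'rV[R]_n.+1) : posorthant t ->
  dotv ('D_v (@nn _) t) e =
  - ww t * \sum_k (t 0 k)^-2 * v 0 k * e 0 k + 'D_v (@ww _) t * dotv (rr t) e.
Proof.
move=> tp.
have dw : derivable (@ww _) t v := diff_derivable (v := v) (differentiable_ww tp).
have dq k : derivable (fun s : 'rV[R]_n.+1 => (s 0 k)^-1) t v.
  apply: derivableV; last exact: derivable_coord.
  by rewrite gt_eqF //; exact: tp.
have Dq k : 'D_v (fun s : 'rV[R]_n.+1 => (s 0 k)^-1) t = - (t 0 k)^-2 * v 0 k.
  rewrite deriveV ?derive_coord //; last exact: derivable_coord.
  by rewrite gt_eqF //; exact: tp.
have comp k : (fun s : 'rV[R]_n.+1 => nn s 0 k) = (@ww _) * (fun s : 'rV[R]_n.+1 => (s 0 k)^-1).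
  by apply/funext => s; rewrite !mxE.
have dn : derivable (@nn _) t v.
  apply/derivable_mxP => i j; rewrite (ord1 i) comp; exact: derivableM.
rewrite (derive_mx dn) /dotv mulr_sumr mulr_sumr -big_split /=.
apply: eq_bigr => k _.
rewrite mxE comp deriveM // Dq /rr mxE /GRing.scale /=.
ring.
Qed.



Lemma prodT m (s : 'rV[R]_m) : \prod_(j in [set: 'I_m]%SET) s 0 j = \prod_j s 0 j.
Proof. by apply: eq_bigl => j; rewrite finset.in_setT. Qed.

Definition FF m (P0 : R) : 'rV[R]_m -> R := mon 1 [set: 'I_m]%SET (- P0).

Lemma FFE m P0 (s : 'rV[R]_m) : FF P0 s = \prod_j s 0 j - P0.
Proof. by rewrite /FF /mon /= mul1r prodT. Qed.

Lemma pos_prod m (s : 'rV[R]_m) : posorthant s -> 0 < \prod_j s 0 j.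
Proof. by move=> sp; apply: prodr_gt0 => j _; exact: sp. Qed.

Lemma pD_FF m P0 (i : 'I_m) (s : 'rV[R]_m) : posorthant s ->
  pD i (FF P0) s = (\prod_j s 0 j) / s 0 i.
Proof.
move=> sp; rewrite /FF pD_mon /mon finset.in_setT mul1r addr0.
rewrite -prodT (big_setD1 i (finset.in_setT i)) /=.
have := sp i; rewrite lt0r => /andP[si0 _]; by field.
Qed.

Lemma grad_FF m P0 (s : 'rV[R]_m) : posorthant s ->
  grad (FF P0) s = (\prod_j s 0 j) *: rr s.
Proof.
by move=> sp; apply/matrixP => i j; rewrite !mxE pD_FF // (ord1 i).
Qed.

Lemma dotvC m (x y : 'rV[R]_m) : dotv x y = dotv y x.
Proof. by apply: eq_bigr => k _; rewrite mulrC. Qed.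

Lemma dotvZl m c (x y : 'rV[R]_m) : dotv (c *: x) y = c * dotv x y.
Proof. by rewrite /dotv mulr_sumr; apply: eq_bigr => k _; rewrite !mxE mulrA. Qed.

Lemma dotvZr m c (x y : 'rV[R]_m) : dotv x (c *: y) = c * dotv x y.
Proof. by rewrite dotvC dotvZl dotvC. Qed.

Lemma enormZ m c (x : 'rV[R]_m) : 0 <= c -> enorm (c *: x) = c * enorm x.
Proof.
move=> c0; rewrite /enorm dotvZl dotvZr mulrA -expr2 sqrtrM ?sqrtr_sqr ?ger0_norm //.
exact: sqr_ge0.
Qed.

Lemma unormal_FF m P0 (s : 'rV[R]_m) : posorthant s -> unormal (FF P0) s = nn s.
Proof.
move=> sp; rewrite /unormal grad_FF // enormZ ?ltW ?pos_prod // scalerA /nn /ww.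
congr (_ *: _); rewrite invfM mulrAC mulVf ?mul1r //.
by rewrite gt_eqF // pos_prod.
Qed.


Lemma curv n (P0 : R) (t : 'rV[R]_n.+1) (e : 'I_n -> 'rV[R]_n.+1) :
  posorthant t -> \prod_j t 0 j = P0 -> tangent_onb (FF P0) t e ->
  gauss_curvature (FF P0) t e =
  (P0^-2 / (n.+1)%:R ^+ n.+1) * dist_tangent (FF P0) t ^+ n.+2.
Proof.
move=> tp hP [eo eg].
have Pgt0 : 0 < P0 by rewrite -hP; exact: pos_prod.
have t0 k : t 0 k != 0 by rewrite gt_eqF //; exact: tp.
have er i : dotv (e i) (rr t) = 0.
  have := eg i; rewrite grad_FF // dotvZr => /eqP; rewrite mulf_eq0 => /orP[|/eqP //].
  by rewrite hP gt_eqF.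
have hnear : \forall s \near t, unormal (FF P0) s = nn s.
  near=> s; apply: unormal_FF; near: s; exact: near_pos.
pose B := \matrix_(i, j) \sum_k (t 0 k)^-2 * e i 0 k * e j 0 k.
have Hsh : shape_matrix (FF P0) t e = ww t *: B.
  apply/matrixP => i j; rewrite !mxE (near_eq_derive _ hnear) derive_nn_dot //.
  rewrite dotvC er mulr0 addr0 mulNr opprK mulr_sumr [RHS]mulr_sumr; apply: eq_bigr => k _; ring.
have HB := detB eo er (dl := fun k => (t 0 k)^-2) (fun k => invr_neq0 (expf_neq0 2 (t0 k))).
have Hs : \sum_k ((t 0 k)^-2)^-1 * rr t 0 k ^+ 2 = (n.+1)%:R.
  rewrite (eq_bigr (fun _ => 1)); last by move=> k _; rewrite mxE; field; exact: t0.
  by rewrite sumr_const card_ord.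
have Hp : \prod_k (t 0 k)^-2 = P0^-2 by rewrite -hP prodfV prodrXl.
rewrite Hs Hp in HB.
have D0 := dot_rr_gt0 tp.
have Hw : ww t ^+ 2 * dotv (rr t) (rr t) = 1.
  by rewrite /ww /enorm exprVn sqr_sqrtr ?ltW // mulVf // gt_eqF.
have wgt0 : 0 < ww t by rewrite /ww /enorm invr_gt0 sqrtr_gt0.
have Hd : dist_tangent (FF P0) t = ww t * (n.+1)%:R.
  rewrite /dist_tangent unormal_FF // /nn dotvZr.
  have -> : dotv t (rr t) = (n.+1)%:R.
    rewrite /dotv (eq_bigr (fun _ => 1)); last by move=> k _; rewrite mxE mulfV.
    by rewrite sumr_const card_ord.
  by rewrite ger0_norm // mulr_ge0 // ltW.
have HdB : \det B = P0^-2 * (n.+1)%:R * ww t ^+ 2.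
  by rewrite -HB mulrC mulrA Hw mul1r.
rewrite /gauss_curvature Hsh detZ HdB Hd.
change (n.+1).-1 with n.
rewrite exprMn (exprS ((n.+1)%:R) n.+1) (exprS (ww t) n.+1) (exprS (ww t) n).
have N0 : (n.+1)%:R != 0 :> R by rewrite pnatr_eq0.
have NX : (n.+1)%:R ^+ n.+1 != 0 :> R by rewrite expf_neq0.
field; rewrite NX gt_eqF //.
Unshelve. all: by end_near. Qed.
End H.

Unset Implicit Arguments.
Theorem mainTheorem8 (R : realType) (m d : nat) (n : 'I_d -> nat)
    (c : 'rV[R]_d) :
  (3 <= m)%N -> (1 <= d)%N ->
  union_of_tzitzeica
    [set t : 'rV[R]_m | posorthant t /\ hermite n (\prod_(i < m) t 0 i) c = 0].
Proof.
case: m => [//|k] hm hd.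
split; first by move=> s [].
move=> t [tp ht].
pose P0 := \prod_j t 0 j.
exists [set s | posorthant s /\ FF P0 s = 0].
split; [| split].
- exists (FF P0); split.
  + split; first exact: smooth_mon.
    split; first by [].
    move=> s [sp _]; apply/eqP => H.
    have := congr1 (fun x : 'rV[R]_k.+1 => x 0 ord0) H.
    rewrite grad_FF // !mxE => /eqP; rewrite mulf_eq0 => /orP[].
      by rewrite gt_eqF // pos_prod.
    by rewrite invr_eq0 gt_eqF //; exact: sp.
  + exists (P0^-2 / (k.+1)%:R ^+ k.+1) => s [sp hs] e he.
    apply: curv => //.
    by move: hs; rewrite FFE => /eqP; rewrite subr_eq0 => /eqP.
- by split => //; rewrite FFE subrr.
- move=> s [sp hs]; split => //.
  have -> : \prod_(i < k.+1) s 0 i = P0.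
    by move: hs; rewrite FFE => /eqP; rewrite subr_eq0 => /eqP.
  exact: ht.
Qed.
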